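(* Let $(A,\succ_A,\prec_A)$ be an anti-pre-Leibniz algebra with sub-adjacent Leibniz algebra $(A,\circ_A)$. If $(l_\succ,r_\succ,l_\prec,r_\prec,V)$ is a representation of $(A,\succ_A,\prec_A)$, then, with $l_\circ=l_\succ+l_\prec$ and $r_\circ=r_\succ+r_\prec$, $$\big(-l_\circ^*,\;-l_\prec^*-r_\succ^*,\;l_\prec^*,\;l_\circ^*+r_\circ^*,\;V^*\big)$$ is also a representation of $(A,\succ_A,\prec_A)$. In particular, $(-\mathcal L^*_{\circ_A},-\mathcal L^*_{\prec_A}-\mathcal R^*_{\succ_A},\mathcal L^*_{\prec_A},\mathcal L^*_{\circ_A}+\mathcal R^*_{\circ_A},A^* )$ is a representation of $(A,\succ_A,\prec_A)$.
   Context: All vector spaces are finite-dimensional over a field $\mathbb K$ of characteristic zero. For a multiplication $\ast$, $\mathcal L_\ast(x)y=x\ast y$, $\mathcal R_\ast(x)y=y\ast x$; for $f:A\to\mathrm{End}(V)$, $f^*:A\to\mathrm{End}(V^* )$ is $\langle f^*(x)u^*,v\rangle=-\langle u^*,f(x)v\rangle$. An anti-pre-Leibniz algebra is a vector space $A$ with multiplications $\succ_A,\prec_A$ such that, with $x\circ_A y=x\succ_A y+x\prec_A y$, for all $x,y,z$: (AL1) $(x\circ_A y)\prec_A z=x\succ_A(y\circ_A z)-y\succ_A(x\circ_A z)$; (AL2) $(x\circ_A y)\succ_A z=y\succ_A(x\succ_A z)-x\succ_A(y\succ_A z)$; (AL3) $x\prec_A(y\circ_A z)=(y\succ_A x)\prec_A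 z-y\succ_A(x\prec_A z)$; (AL4) $(x\succ_A y)\prec_A z=-(y\prec_A x)\prec_A z$. Its sub-adjacent Leibniz algebra is $(A,\circ_A)$. A representation of an anti-pre-Leibniz algebra $(A,\succ_A,\prec_A)$ is a tuple $(l_\succ,r_\succ,l_\prec,r_\prec,V)$ of linear maps $A\to\mathrm{End}(V)$ such that, writing $l_\circ=l_\succ+l_\prec$, $r_\circ=r_\succ+r_\prec$, for all $x,y\in A$ (as operators on $V$): (R1) $r_\prec(x)r_\circ(y)=r_\succ(y\circ_A x)-l_\succ(y)r_\circ(x)$; (R2) $r_\succ(x)r_\circ(y)=l_\succ(y)r_\succ(x)-r_\succ(y\succ_A x)$; (R3) $r_\prec(x\circ_A y)=r_\prec(y)l_\succ(x)-l_\succ(x)r_\prec(y)$; (R4) $r_\prec(x)r_\succ(y)=-r_\prec(x)l_\prec(y)$; (R5) $r_\succ(x)l_\circ(y)=r_\succ(y\succ_A x)-l_\succ(y)r_\succ(x)$; (R6) $l_\prec(x)r_\circ(y)=r_\prec(y)r_\succ(x)-r_\succ(x\prec_A y)$; (R7) $r_\prec(x)l_\succ(y)=-r_\prec(x)r_\prec(y)$; (R8) $l_\prec(x\circ_A y)=l_\succ(x)l_\circ(y)-l_\succ(y)l_\circ(x)$; (R9) $l_\succ(x\circ_A y)=l_\succ(y)l_\succ(x)-l_\succ(x)l_\succ(y)$; (R10) $l_\prec(x)l_\circ(y)=l_\prec(y\succ_A x)-l_\succ(y)l_\prec(x)$; (R11) $l_\prec(x\succ_A y)=-l_\prec(y\prec_A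 x)$. *)

(* Defs.v *)
From HB Require Import structures.
From mathcomp Require Import all_boot all_algebra.
Set Implicit Arguments. Unset Strict Implicit. Unset Printing Implicit Defensive.
Import GRing.Theory.
Local Open Scope ring_scope.

Section Defs.
Variable K : fieldType.

Definition bilinear_op (A : vectType K) (op : A -> A -> A) : Prop :=
  (forall (a : K) (x y z : A), op z (a *: x + y) = a *: op z x + op z y) /\
  (forall (a : K) (x y z : A), op (a *: x + y) z = a *: op x z + op y z).

Definition linmap (A W : vectType K) (f : A -> W) : Prop :=
  forall (a : K) (x y : A), f (a *: x + y) = a *: f x + f y.

Section APL.
Variable A : vectType K.
Variables (sc pc : A -> A -> A). (* sc = succ, pc = prec *)
Let cc x y := sc x y + pc x y.

Definition anti_pre_Leibniz : Prop :=
  [/\ (forall x y z, pc (cc x y) z = sc x (cc y z) - sc y (cc x z)),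
      (forall x y z, sc (cc x y) z = sc y (sc x z) - sc x (sc y z)),
      (forall x y z, pc x (cc y z) = pc (sc y x) z - sc y (pc x z)) &
      (forall x y z, pc (sc x y) z = - pc (pc y x) z)].

Definition is_rep (V : vectType K) (ls rs lp rp : A -> 'End(V)) : Prop :=
  let lc x := ls x + lp x in
  let rc x := rs x + rp x in
  (linmap ls /\ linmap rs /\ linmap lp /\ linmap rp) /\
  ((forall x y, (rp x \o rc y)%VF = rs (cc y x) - (ls y \o rc x)%VF) /\
      (forall x y, (rs x \o rc y)%VF = (ls y \o rs x)%VF - rs (sc y x)) /\
      (forall x y, rp (cc x y) = (rp y \o ls x)%VF - (ls x \o rp y)%VF) /\
      (forall x y, (rp x \o rs y)%VF = - (rp x \o lp y)%VF) /\
      (forall x y, (rs x \o lc y)%VF = rs (sc y x) - (ls y \o rs x)%VF) /\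
      (forall x y, (lp x \o rc y)%VF = (rp y \o rs x)%VF - rs (pc x y)) /\
      (forall x y, (rp x \o ls y)%VF = - (rp x \o rp y)%VF) /\
      (forall x y, lp (cc x y) = (ls x \o lc y)%VF - (ls y \o lc x)%VF) /\
      (forall x y, ls (cc x y) = (ls y \o ls x)%VF - (ls x \o ls y)%VF) /\
      (forall x y, (lp x \o lc y)%VF = lp (sc y x) - (ls y \o lp x)%VF) /\
      (forall x y, lp (sc x y) = - lp (pc y x))).

End APL.

(* dual space V^* := 'Hom(V, K^o); dual map f^*(x) u^* = - u^* \o f(x),
   i.e. <f^*(x)u^*, v> = - <u^*, f(x) v> *)
Definition dualmap (A V : vectType K) (f : A -> 'End(V)) :
    A -> 'End('Hom(V, K^o)) :=
  fun x => linfun (fun u : 'Hom(V, K^o) => - (u \o f x)%VF).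

Definition Lmul (A : vectType K) (op : A -> A -> A) : A -> 'End(A) :=
  fun x => linfun (op x).
Definition Rmul (A : vectType K) (op : A -> A -> A) : A -> 'End(A) :=
  fun x => linfun (fun y => op y x).

End Defs.

(* Main.v *)
Require Import Defs.
From HB Require Import structures.
From mathcomp Require Import all_boot all_algebra.
From mathcomp Require Import ring.
From Stdlib Require Import FunctionalExtensionality.
Import GRing.Theory.
Local Open Scope ring_scope.
Set Implicit Arguments. Unset Strict Implicit. Unset Printing Implicit Defensive.

Section H.
Variable K : fieldType.

Lemma linfunE (aT rT : vectType K) (f : aT -> rT) (lf : linear f) x :
  linfun f x = f x.
Proof.
pose flM := GRing.isLinear.Build _ _ _ _ f lf.
pose fL : {linear _ -> _} := HB.pack f flM.
exact: (lfunE fL).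
Qed.

Lemma scaleKo (a : K) (t : K^o) : a *: t = (a * t : K).
Proof. by []. Qed.

Lemma dualE (A V : vectType K) (f : A -> 'End(V)) x u :
  dualmap f x u = - (u \o f x)%VF.
Proof.
rewrite /dualmap linfunE // => a w1 w2; apply/lfunP => v.
by rewrite !lfun_simp /= scalerN opprD.
Qed.

Lemma dualEE (A V : vectType K) (f : A -> 'End(V)) x u v :
  dualmap f x u v = - u (f x v).
Proof. by rewrite dualE !lfun_simp. Qed.

Lemma lmD (A W : vectType K) (f : A -> W) : linmap f -> forall a b, f (a + b) = f a + f b.
Proof. by move=> h a b; have := h 1 a b; rewrite !scale1r. Qed.

Lemma lmZ (A W : vectType K) (f : A -> W) : linmap f -> forall a b, f (a *: b) = a *: f b.
Proof.
move=> h a b; have h0 : f 0 = 0.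
  have e := h 1 0 0; rewrite !scale1r addr0 in e.
  by apply: (addrI (f 0)); rewrite addr0 -e.
by have := h a b 0; rewrite addr0 h0 addr0.
Qed.

Lemma lfD (aT rT : vectType K) (f : 'Hom(aT,rT)) a b : f (a + b) = f a + f b.
Proof. exact: raddfD. Qed.
Lemma lfN (aT rT : vectType K) (f : 'Hom(aT,rT)) a : f (- a) = - f a.
Proof. exact: raddfN. Qed.
Lemma lfZ (aT rT : vectType K) (f : 'Hom(aT,rT)) (k : K) a : f (k *: a) = k *: f a.
Proof. exact: linearZ. Qed.

Lemma toK (a b : K) : a = b -> a = b. Proof. by []. Qed.

Lemma lcomb (a b l r k : K) : l = r -> a + k * (l - r) = b -> a = b.
Proof. by move=> ->; rewrite subrr mulr0 addr0. Qed.

Variables (A : vectType K) (sc pc : A -> A -> A).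

Ltac simpK hls hrs hlp hrp :=
  rewrite ?(comp_lfunE, add_lfunE, opp_lfunE, scale_lfunE, dualEE, lfD, lfN, lfZ, scaleKo); cbv beta; rewrite ?(lmD hls) ?(lmD hrs) ?(lmD hlp) ?(lmD hrp) ?(lmZ hls) ?(lmZ hrs) ?(lmZ hlp) ?(lmZ hrp); rewrite ?(comp_lfunE, add_lfunE, opp_lfunE, scale_lfunE, dualEE, lfD, lfN, lfZ, scaleKo).
Ltac simpH hls hrs hlp hrp h :=
  rewrite ?(comp_lfunE, add_lfunE, opp_lfunE, scale_lfunE, dualEE, lfD, lfN, lfZ, scaleKo) in h; cbv beta in h; rewrite ?(lmD hls) ?(lmD hrs) ?(lmD hlp) ?(lmD hrp) ?(lmZ hls) ?(lmZ hrs) ?(lmZ hlp) ?(lmZ hrp) in h; rewrite ?(comp_lfunE, add_lfunE, opp_lfunE, scale_lfunE, dualEE, lfD, lfN, lfZ, scaleKo) in h.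

Lemma part1 (V : vectType K) (ls rs lp rp : A -> 'End(V)) :
     is_rep sc pc ls rs lp rp ->
     is_rep sc pc
       (fun x => - dualmap (fun y => ls y + lp y) x)
       (fun x => - dualmap lp x - dualmap rs x)
       (fun x => dualmap lp x)
       (fun x => dualmap (fun y => ls y + lp y) x
                 + dualmap (fun y => rs y + rp y) x).
Proof.
rewrite /is_rep; cbv beta zeta.
move=> [[hls [hrs [hlp hrp]]] [H1 [H2 [H3 [H4 [H5 [H6 [H7 [H8 [H9 [H10 H11]]]]]]]]]]].
split.
  split; [|split; [|split]] => a x y; apply/lfunP => u; apply/lfunP => v;
  simpK hls hrs hlp hrp;
  ring.
split.
  move=> x y; apply/lfunP => u; apply/lfunP => v.
  simpK hls hrs hlp hrp.
  have h0 := congr1 (fun T : 'End(V) => u (T v)) (H1 x y); simpH hls hrs hlp hrp h0.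
  have h1 := congr1 (fun T : 'End(V) => u (T v)) (H4 x y); simpH hls hrs hlp hrp h1.
  have h2 := congr1 (fun T : 'End(V) => u (T v)) (H4 y x); simpH hls hrs hlp hrp h2.
  have h3 := congr1 (fun T : 'End(V) => u (T v)) (H7 x y); simpH hls hrs hlp hrp h3.
  have h4 := congr1 (fun T : 'End(V) => u (T v)) (H7 y x); simpH hls hrs hlp hrp h4.
  have h5 := congr1 (fun T : 'End(V) => u (T v)) (H8 y x); simpH hls hrs hlp hrp h5.
  apply: (lcomb (k := (-1)) h0).
  apply: (lcomb (k := 1) h1).
  apply: (lcomb (k := (-1)) h2).
  apply: (lcomb (k := 1) h3).
  apply: (lcomb (k := (-1)) h4).
  apply: (lcomb (k := 1) h5).
  ring.
split.
  move=> x y; apply/lfunP => u; apply/lfunP => v.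
  simpK hls hrs hlp hrp.
  have h0 := congr1 (fun T : 'End(V) => u (T v)) (H4 y x); simpH hls hrs hlp hrp h0.
  have h1 := congr1 (fun T : 'End(V) => u (T v)) (H5 x y); simpH hls hrs hlp hrp h1.
  have h2 := congr1 (fun T : 'End(V) => u (T v)) (H10 x y); simpH hls hrs hlp hrp h2.
  apply: (lcomb (k := 1) h0).
  apply: (lcomb (k := 1) h1).
  apply: (lcomb (k := 1) h2).
  ring.
split.
  move=> x y; apply/lfunP => u; apply/lfunP => v.
  simpK hls hrs hlp hrp.
  have h0 := congr1 (fun T : 'End(V) => u (T v)) (H1 y x); simpH hls hrs hlp hrp h0.
  have h1 := congr1 (fun T : 'End(V) => u (T v)) (H3 x y); simpH hls hrs hlp hrp h1.
  have h2 := congr1 (fun T : 'End(V) => u (T v)) (H4 y x); simpH hls hrs hlp hrp h2.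
  have h3 := congr1 (fun T : 'End(V) => u (T v)) (H5 y x); simpH hls hrs hlp hrp h3.
  have h4 := congr1 (fun T : 'End(V) => u (T v)) (H6 x y); simpH hls hrs hlp hrp h4.
  have h5 := congr1 (fun T : 'End(V) => u (T v)) (H7 y x); simpH hls hrs hlp hrp h5.
  have h6 := congr1 (fun T : 'End(V) => u (T v)) (H8 x y); simpH hls hrs hlp hrp h6.
  have h7 := congr1 (fun T : 'End(V) => u (T v)) (H8 y x); simpH hls hrs hlp hrp h7.
  have h8 := congr1 (fun T : 'End(V) => u (T v)) (H9 x y); simpH hls hrs hlp hrp h8.
  have h9 := congr1 (fun T : 'End(V) => u (T v)) (H10 x y); simpH hls hrs hlp hrp h9.
  have h10 := congr1 (fun T : 'End(V) => u (T v)) (H10 y x); simpH hls hrs hlp hrp h10.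
  have h11 := congr1 (fun T : 'End(V) => u (T v)) (H11 x y); simpH hls hrs hlp hrp h11.
  apply: (lcomb (k := (-2)) h0).
  apply: (lcomb (k := 1) h1).
  apply: (lcomb (k := 1) h2).
  apply: (lcomb (k := 1) h3).
  apply: (lcomb (k := (-1)) h4).
  apply: (lcomb (k := 2) h5).
  apply: (lcomb (k := 1) h6).
  apply: (lcomb (k := (-1)) h7).
  apply: (lcomb (k := 1) h8).
  apply: (lcomb (k := (-1)) h9).
  apply: (lcomb (k := 1) h10).
  apply: (lcomb (k := 1) h11).
  ring.
split.
  move=> x y; apply/lfunP => u; apply/lfunP => v.
  simpK hls hrs hlp hrp.
  have h0 := congr1 (fun T : 'End(V) => u (T v)) (H2 y x); simpH hls hrs hlp hrp h0.
  have h1 := congr1 (fun T : 'End(V) => u (T v)) (H5 y x); simpH hls hrs hlp hrp h1.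
  apply: (lcomb (k := 1) h0).
  apply: (lcomb (k := 1) h1).
  ring.
split.
  move=> x y; apply/lfunP => u; apply/lfunP => v.
  simpK hls hrs hlp hrp.
  have h0 := congr1 (fun T : 'End(V) => u (T v)) (H5 x y); simpH hls hrs hlp hrp h0.
  have h1 := congr1 (fun T : 'End(V) => u (T v)) (H10 x y); simpH hls hrs hlp hrp h1.
  apply: (lcomb (k := (-1)) h0).
  apply: (lcomb (k := (-1)) h1).
  ring.
split.
  move=> x y; apply/lfunP => u; apply/lfunP => v.
  simpK hls hrs hlp hrp.
  have h0 := congr1 (fun T : 'End(V) => u (T v)) (H2 x y); simpH hls hrs hlp hrp h0.
  have h1 := congr1 (fun T : 'End(V) => u (T v)) (H4 y x); simpH hls hrs hlp hrp h1.
  have h2 := congr1 (fun T : 'End(V) => u (T v)) (H5 x y); simpH hls hrs hlp hrp h2.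
  have h3 := congr1 (fun T : 'End(V) => u (T v)) (H6 x y); simpH hls hrs hlp hrp h3.
  have h4 := congr1 (fun T : 'End(V) => u (T v)) (H8 x y); simpH hls hrs hlp hrp h4.
  have h5 := congr1 (fun T : 'End(V) => u (T v)) (H8 y x); simpH hls hrs hlp hrp h5.
  have h6 := congr1 (fun T : 'End(V) => u (T v)) (H10 x y); simpH hls hrs hlp hrp h6.
  have h7 := congr1 (fun T : 'End(V) => u (T v)) (H11 x y); simpH hls hrs hlp hrp h7.
  apply: (lcomb (k := (-1)) h0).
  apply: (lcomb (k := (-1)) h1).
  apply: (lcomb (k := (-1)) h2).
  apply: (lcomb (k := (-1)) h3).
  apply: (lcomb (k := (-1)) h4).
  apply: (lcomb (k := (-1)) h5).
  apply: (lcomb (k := (-1)) h6).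
  apply: (lcomb (k := 1) h7).
  ring.
split.
  move=> x y; apply/lfunP => u; apply/lfunP => v.
  simpK hls hrs hlp hrp.
  have h0 := congr1 (fun T : 'End(V) => u (T v)) (H2 y x); simpH hls hrs hlp hrp h0.
  have h1 := congr1 (fun T : 'End(V) => u (T v)) (H4 y x); simpH hls hrs hlp hrp h1.
  have h2 := congr1 (fun T : 'End(V) => u (T v)) (H5 y x); simpH hls hrs hlp hrp h2.
  have h3 := congr1 (fun T : 'End(V) => u (T v)) (H7 y x); simpH hls hrs hlp hrp h3.
  apply: (lcomb (k := (-1)) h0).
  apply: (lcomb (k := (-1)) h1).
  apply: (lcomb (k := (-1)) h2).
  apply: (lcomb (k := (-1)) h3).
  ring.
split.
  move=> x y; apply/lfunP => u; apply/lfunP => v.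
  simpK hls hrs hlp hrp.
  have h0 := congr1 (fun T : 'End(V) => u (T v)) (H8 x y); simpH hls hrs hlp hrp h0.
  apply: (lcomb (k := 1) h0).
  ring.
split.
  move=> x y; apply/lfunP => u; apply/lfunP => v.
  simpK hls hrs hlp hrp.
  have h0 := congr1 (fun T : 'End(V) => u (T v)) (H8 x y); simpH hls hrs hlp hrp h0.
  have h1 := congr1 (fun T : 'End(V) => u (T v)) (H8 y x); simpH hls hrs hlp hrp h1.
  have h2 := congr1 (fun T : 'End(V) => u (T v)) (H9 x y); simpH hls hrs hlp hrp h2.
  have h3 := congr1 (fun T : 'End(V) => u (T v)) (H10 x y); simpH hls hrs hlp hrp h3.
  have h4 := congr1 (fun T : 'End(V) => u (T v)) (H10 y x); simpH hls hrs hlp hrp h4.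
  have h5 := congr1 (fun T : 'End(V) => u (T v)) (H11 x y); simpH hls hrs hlp hrp h5.
  apply: (lcomb (k := (-1)) h0).
  apply: (lcomb (k := 1) h1).
  apply: (lcomb (k := (-1)) h2).
  apply: (lcomb (k := 1) h3).
  apply: (lcomb (k := (-1)) h4).
  apply: (lcomb (k := (-1)) h5).
  ring.
split.
  move=> x y; apply/lfunP => u; apply/lfunP => v.
  simpK hls hrs hlp hrp.
  have h0 := congr1 (fun T : 'End(V) => u (T v)) (H10 x y); simpH hls hrs hlp hrp h0.
  apply: (lcomb (k := 1) h0).
  ring.
  move=> x y; apply/lfunP => u; apply/lfunP => v.
  simpK hls hrs hlp hrp.
  have h0 := congr1 (fun T : 'End(V) => u (T v)) (H11 x y); simpH hls hrs hlp hrp h0.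
  apply: (lcomb (k := 1) h0).
  ring.
Qed.

Lemma LmulE (op : A -> A -> A) (h : bilinear_op op) x z : Lmul op x z = op x z.
Proof. by rewrite /Lmul linfunE // => a u w; rewrite h.1. Qed.
Lemma RmulE (op : A -> A -> A) (h : bilinear_op op) x z : Rmul op x z = op z x.
Proof. by rewrite /Rmul linfunE // => a u w; rewrite h.2. Qed.

Lemma regular (hsc : bilinear_op sc) (hpc : bilinear_op pc)
    (hA : anti_pre_Leibniz sc pc) :
  is_rep sc pc (Lmul sc) (Rmul sc) (Lmul pc) (Rmul pc).
Proof.
case: hA => [A1 A2 A3 A4].
rewrite /is_rep; cbv beta zeta.
split.
  split; [|split; [|split]] => a x y; apply/lfunP => z;
  rewrite !lfun_simp ?(LmulE hsc, LmulE hpc, RmulE hsc, RmulE hpc) ?hsc.1 ?hsc.2 ?hpc.1 ?hpc.2 //.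
do 10 (split; first by move=> x y; apply/lfunP => z;
  rewrite !lfun_simp ?(LmulE hsc, LmulE hpc, RmulE hsc, RmulE hpc)).
by move=> x y; apply/lfunP => z;
  rewrite !lfun_simp ?(LmulE hsc, LmulE hpc, RmulE hsc, RmulE hpc).
Qed.
Lemma bil_cc (hsc : bilinear_op sc) (hpc : bilinear_op pc) :
  bilinear_op (fun u v => sc u v + pc u v).
Proof.
split => a x y z; first by rewrite hsc.1 hpc.1 scalerDr addrACA.
by rewrite hsc.2 hpc.2 scalerDr addrACA.
Qed.
End H.


Unset Implicit Arguments.
Theorem proposition2p20 (K : fieldType) (charK0 : [pchar K] =i pred0)
    (A : vectType K) (sc pc : A -> A -> A)
    (hsc : bilinear_op sc) (hpc : bilinear_op pc)
    (hA : anti_pre_Leibniz sc pc) :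
  (forall (V : vectType K) (ls rs lp rp : A -> 'End(V)),
     is_rep sc pc ls rs lp rp ->
     is_rep sc pc
       (fun x => - dualmap (fun y => ls y + lp y) x)
       (fun x => - dualmap lp x - dualmap rs x)
       (fun x => dualmap lp x)
       (fun x => dualmap (fun y => ls y + lp y) x
                 + dualmap (fun y => rs y + rp y) x)) /\
  is_rep sc pc
    (fun x => - dualmap (Lmul (fun u v => sc u v + pc u v)) x)
    (fun x => - dualmap (Lmul pc) x - dualmap (Rmul sc) x)
    (fun x => dualmap (Lmul pc) x)
    (fun x => dualmap (Lmul (fun u v => sc u v + pc u v)) x
              + dualmap (Rmul (fun u v => sc u v + pc u v)) x).

Proof.
split; first exact: part1.
have hcc := bil_cc hsc hpc.
have eL : Lmul (fun u v => sc u v + pc u v) = (fun y => Lmul sc y + Lmul pc y).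
  apply: functional_extensionality => y; apply/lfunP => z.
  by rewrite !lfun_simp !LmulE.
have eR : Rmul (fun u v => sc u v + pc u v) = (fun y => Rmul sc y + Rmul pc y).
  apply: functional_extensionality => y; apply/lfunP => z.
  by rewrite !lfun_simp !RmulE.
rewrite eL eR.
exact: (part1 (regular hsc hpc hA)).
Qed.
Print Assumptions proposition2p20.
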